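(* Let $(T_1,T_2)$ be a commuting pair of contractions on a complex Banach space $\mathbb X$ such that for $i=1,2$ the function $A_{T_i}(x)=(\|x\|^2-\|T_ix\|^2)^{1/2}$ defines a norm on $\mathbb X$. Put $\mathbb X_i=(\mathbb X,A_{T_i})$ for $i=1,2$, and consider the subspaces of $\mathbb X_1\oplus_2\mathbb X_2$ $$\widehat M_1=\{(T_2x,x):x\in\mathbb X\},\qquad \widehat M_2=\{(x,T_1x):x\in\mathbb X\}.$$ Suppose $\|T_1T_2\|<1$. Then: (i) with $T=T_1T_2$, the function $A_T(x)=(\|x\|^2-\|Tx\|^2)^{1/2}$ defines a norm on $\mathbb X$; (ii) $\widehat M_1$ and $\widehat M_2$ are closed in $\mathbb X_1\oplus_2\mathbb X_2$ and $\widehat M_1\cap\widehat M_2=\{\mathbf 0\}$; (iii) if there exist subspaces $\mathbb Y_1,\mathbb Y_2$ of $\mathbb X_1\oplus_2\mathbb X_2$ and a surjective linear isometry $\mathbb Y_1\to\mathbb Y_2$ such that $\widehat M_1\oplus_2\mathbb Y_1=\mathbb X_1\oplus_2\mathbb X_2=\widehat M_2\oplus_2\mathbb Y_2$, then there is a unitary $S$ on $\mathbb X_1\oplus_2\mathbb X_2$ with $S(\widehat M_1)=\widehat M_2$, more precisely $S(T_2x,x)=(x,T_1x)$ for all $x\in\mathbb X$.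
   Context: For a contraction $T$ on a normed space $\mathbb X$, $A_T:\mathbb X\to[0,\infty)$ is $A_T(x)=(\|x\|^2-\|Tx\|^2)^{1/2}$; ''$A_T$ defines a norm'' means $A_T$ is a norm on the vector space $\mathbb X$, and $(\mathbb X,A_T)$ denotes $\mathbb X$ equipped with this norm. $\mathbb X_1\oplus_2\mathbb X_2$ is the space of pairs with norm $\|(x_1,x_2)\|=(\|x_1\|^2+\|x_2\|^2)^{1/2}$. A unitary on a normed space is a surjective linear isometry. For subspaces $M,Y$ of a normed space $Z$, $M\oplus_2 Y=Z$ means every $z\in Z$ is uniquely $z=m+y$ with $m\in M$, $y\in Y$, and $\|m+y\|^2=\|m\|^2+\|y\|^2$ for all $m\in M,y\in Y$. *)

(* Defs.v *)
(* Complex scalars: R[i] (mathcomp-real-closed)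
   over R : realType.  Norms are taken real-valued: ||x|| := Re `|x|. *)
From mathcomp Require Import all_boot all_order all_algebra.
From mathcomp Require Import all_classical all_reals all_analysis.
From mathcomp Require Import complex.
Import Order.TTheory GRing.Theory Num.Theory.
Import numFieldNormedType.Exports.
Set Implicit Arguments. Unset Strict Implicit. Unset Printing Implicit Defensive.
Local Open Scope ring_scope.
Local Open Scope classical_set_scope.

Section Defs.
Variable R : realType.
Variable X : normedModType R[i].

Definition nrm (x : X) : R := complex.Re `|x|.
Definition cabs (a : R[i]) : R := complex.Re `|a|.

Definition contraction_op (T : X -> X) : Prop := forall x, nrm (T x) <= nrm x.

Definition A_op (T : X -> X) (x : X) : R :=
  Num.sqrt (nrm x ^+ 2 - nrm (T x) ^+ 2).

Definition is_norm (N : X -> R) : Prop :=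
  [/\ forall x, 0 <= N x,
      forall x, N x = 0 -> x = 0,
      forall (a : R[i]) x, N (a *: x) = cabs a * N x
    & forall x y, N (x + y) <= N x + N y].

Definition opnorm_lt1 (T : X -> X) : Prop :=
  exists c : R, c < 1 /\ forall x, nrm (T x) <= c * nrm x.

Definition sum2_norm (N1 N2 : X -> R) (z : X * X) : R :=
  Num.sqrt (N1 z.1 ^+ 2 + N2 z.2 ^+ 2).

Definition M1hat (T2 : X -> X) : set (X * X) := [set z | exists x, z = (T2 x, x)].
Definition M2hat (T1 : X -> X) : set (X * X) := [set z | exists x, z = (x, T1 x)].

Definition closed_wrt (N : X * X -> R) (S : set (X * X)) : Prop :=
  forall (u : nat -> X * X) (z : X * X),
    (forall n, S (u n)) -> (fun n => N (u n - z)) @ \oo --> (0 : R) -> S z.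

Definition lin_subspace (S : set (X * X)) : Prop :=
  S 0 /\ forall (a : R[i]) u v, S u -> S v -> S (a *: u + v).

Definition orth_decomp (N : X * X -> R) (M Y : set (X * X)) : Prop :=
  [/\ forall z, exists m y, [/\ M m, Y y & z = m + y],
      forall m y m' y', M m -> Y y -> M m' -> Y y' -> m + y = m' + y' ->
        m = m' /\ y = y'
    & forall m y, M m -> Y y -> N (m + y) ^+ 2 = N m ^+ 2 + N y ^+ 2].

Definition surj_lin_isometry (N : X * X -> R) (Y1 Y2 : set (X * X))
    (f : X * X -> X * X) : Prop :=
  [/\ forall y, Y1 y -> Y2 (f y),
      forall y', Y2 y' -> exists2 y, Y1 y & f y = y',
      forall (a : R[i]) u v, Y1 u -> Y1 v -> f (a *: u + v) = a *: f u + f v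
    & forall y, Y1 y -> N (f y) = N y].

Definition unitary (N : X * X -> R) (S : X * X -> X * X) : Prop :=
  [/\ forall (a : R[i]) u v, S (a *: u + v) = a *: S u + S v,
      forall z', exists z, S z = z'
    & forall z, N (S z) = N z].

End Defs.

(* Main.v *)
Require Import Defs.
From mathcomp Require Import all_boot all_order all_algebra.
From mathcomp Require Import all_classical all_reals all_analysis.
From mathcomp Require Import complex.
Import Order.TTheory GRing.Theory Num.Theory.
Import numFieldNormedType.Exports.
Local Open Scope ring_scope.
Local Open Scope classical_set_scope.
From mathcomp Require Import ring lra.

Lemma cnorm_real (R : realType) (X : normedModType R[i]) (x : X) :
  `|x| = (nrm x)%:C%C.
Proof.
have : 0 <= `|x| by [].
rewrite /nrm; case: (`|x|) => a b /=.
by rewrite lecE /= => /andP[/eqP -> _].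
Qed.

Lemma eventually_ex (P : nat -> Prop) :
  (\forall n \near \oo, P n) -> exists N, forall n, (N <= n)%N -> P n.
Proof. by case=> N _ HN; exists N. Qed.

Lemma complete_seq (R : realType) (X : completeNormedModType R[i]) (xs : nat -> X) :
  (forall e : R, 0 < e -> exists N, forall n m, (N <= n)%N -> (N <= m)%N ->
      nrm (xs n - xs m) < e) ->
  exists x, forall e : R, 0 < e -> exists N, forall n, (N <= n)%N -> nrm (xs n - x) < e.
Proof.
move=> Hc.
have Hcv : cvg (xs @ \oo).
  apply: cauchy_cvg; apply: cauchy_exP => eps eps0.
  have : 0 < complex.Re eps by move: eps0; rewrite ltcE => /andP[_].
  move=> /Hc [N HN]; exists (xs N); exists N => // n /= Nn.
  rewrite -ball_normE /ball_ /= cnorm_real.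
  rewrite ltcE /=; apply/andP; split; last by apply: HN.
  by move: eps0; rewrite ltcE /= => /andP[].
exists (lim (xs @ \oo)) => e e0.
have e0' : 0 < e%:C%C :> R[i] by rewrite ltcE /= eqxx e0.
move/cvgrPdist_lt: Hcv => H.
have := H (e%:C%C) e0'.
move=> /eventually_ex [N HN]; exists N => n Nn.
have := HN n Nn; rewrite -normrN opprB cnorm_real ltcE /=.
by case/andP.
Qed.

Section NrmFacts.
Context {R : realType} {X : normedModType R[i]}.
Implicit Types x y : X.

Lemma nrm_ge0 x : 0 <= nrm x.
Proof. by have : 0 <= `|x| by []; rewrite cnorm_real lecE /= => /andP[]. Qed.

Lemma nrm0 : nrm (0 : X) = 0.
Proof. by rewrite /nrm normr0. Qed.

Lemma nrm_eq0 x : nrm x = 0 -> x = 0.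
Proof. by move=> h; apply/eqP; rewrite -normr_eq0 cnorm_real h. Qed.

Lemma nrmN x : nrm (- x) = nrm x.
Proof. by rewrite /nrm normrN. Qed.

Lemma nrmB x y : nrm (x - y) = nrm (y - x).
Proof. by rewrite -nrmN opprB. Qed.

Lemma nrmD x y : nrm (x + y) <= nrm x + nrm y.
Proof.
have := ler_normD x y; rewrite !cnorm_real lecE /= => /andP[_].
by [].
Qed.

Lemma cabs_ge0 (a : R[i]) : 0 <= cabs a.
Proof. by have : 0 <= `|a| by []; rewrite /cabs; case: (`|a|) => u v; rewrite lecE /= => /andP[]. Qed.

Lemma nrmZ (a : R[i]) x : nrm (a *: x) = cabs a * nrm x.
Proof.
rewrite /nrm /cabs normrZ cnorm_real.
have : 0 <= `|a| by [].
case: (`|a|) => u v; rewrite lecE /= => /andP[/eqP -> _].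
by rewrite /= !mul0r subr0.
Qed.

End NrmFacts.

Section RealFacts.
Context {R : realType}.
Implicit Types a b c d p q s t : R.

Lemma le_of_sq p q : 0 <= q -> p ^+ 2 <= q ^+ 2 -> p <= q.
Proof.
move=> q0 h; apply: (le_trans (ler_norm p)).
by rewrite -sqrtr_sqr -[q](ger0_norm q0) -sqrtr_sqr ler_sqrt // sqr_ge0.
Qed.

Lemma sqrt_le_sq a q : 0 <= q -> a <= q ^+ 2 -> Num.sqrt a <= q.
Proof.
move=> q0 h; apply: le_of_sq => //.
case: (leP 0 a) => a0; first by rewrite sqr_sqrtr.
have -> : Num.sqrt a = 0 by apply/eqP; rewrite sqrtr_eq0 ltW.
by rewrite expr0n /= sqr_ge0.
Qed.

Lemma eq_of_sq p q : 0 <= p -> 0 <= q -> p ^+ 2 = q ^+ 2 -> p = q.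
Proof.
move=> p0 q0 h; apply/le_anti/andP; split; apply: le_of_sq => //; by rewrite h.
Qed.

Lemma cs_ineq a b c d s t : 0 <= s -> 0 <= t ->
  s ^+ 2 = a ^+ 2 + c ^+ 2 -> t ^+ 2 = b ^+ 2 + d ^+ 2 -> a * b + c * d <= s * t.
Proof.
move=> s0 t0 hs ht; apply: le_of_sq; first exact: mulr_ge0.
rewrite exprMn hs ht.
have := sqr_ge0 (a * d - b * c).
nra.
Qed.

Lemma nonpos_of_small a : (forall e : R, 0 < e -> a <= e) -> a <= 0.
Proof.
move=> h; case: (leP a 0) => // a0.
have := h (a / 2); rewrite divr_gt0 // => /(_ isT).
lra.
Qed.

End RealFacts.

Section Main.
Variables (R : realType) (X : completeNormedModType R[i]) (T1 T2 : {linear X -> X}).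
Hypotheses (Hcomm : forall x, T1 (T2 x) = T2 (T1 x))
  (C1 : contraction_op T1) (C2 : contraction_op T2)
  (NA1 : is_norm (A_op T1)) (NA2 : is_norm (A_op T2))
  (Hc : opnorm_lt1 (fun x => T1 (T2 x))).

Local Notation T := (fun x => T1 (T2 x)).
Local Notation N := (sum2_norm (A_op T1) (A_op T2)).

Lemma CT : contraction_op T.
Proof. by move=> x; apply: le_trans (C1 _) (C2 _). Qed.

Lemma A_sq [S : X -> X] : contraction_op S -> forall x,
  A_op S x ^+ 2 = nrm x ^+ 2 - nrm (S x) ^+ 2.
Proof.
move=> CS x; rewrite sqr_sqrtr // subr_ge0.
have := CS x; have := nrm_ge0 (S x); nra.
Qed.

Lemma A_ge0 (S : X -> X) x : 0 <= A_op S x.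
Proof. exact: sqrtr_ge0. Qed.

Lemma N_sq z : N z ^+ 2 = A_op T1 z.1 ^+ 2 + A_op T2 z.2 ^+ 2.
Proof. by rewrite sqr_sqrtr // addr_ge0 // sqr_ge0. Qed.

Lemma N_ge0 z : 0 <= N z.
Proof. exact: sqrtr_ge0. Qed.

Lemma N_M1 x : N (T2 x, x) = A_op T x.
Proof.
apply: eq_of_sq; [exact: N_ge0 | exact: A_ge0 |].
rewrite N_sq /= (A_sq C1) (A_sq C2) (A_sq CT); lra.
Qed.

Lemma N_M2 x : N (x, T1 x) = A_op T x.
Proof.
apply: eq_of_sq; [exact: N_ge0 | exact: A_ge0 |].
rewrite N_sq /= (A_sq C1) (A_sq C2) (A_sq CT) Hcomm; lra.
Qed.

Lemma AT_le x : A_op T x <= nrm x.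
Proof.
apply: sqrt_le_sq; first exact: nrm_ge0.
have := sqr_ge0 (nrm (T x)); lra.
Qed.

Lemma AT_lb : exists2 k : R, 0 < k & forall x, k * nrm x <= A_op T x.
Proof.
case: Hc => c [c1 hc].
exists (1 - c); first lra.
move=> x; apply: le_of_sq; first exact: A_ge0.
rewrite (A_sq CT).
have := hc x; have := nrm_ge0 x; have := nrm_ge0 (T x).
move: (nrm x) (nrm (T x)) => a b a0 b0 hb.
have h1 : 0 <= (c * a - b) * (a + b) by apply: mulr_ge0; lra.
have h2 : 0 <= (1 - c) * a * b by apply: mulr_ge0; [apply: mulr_ge0; lra | lra].
have h3 : 0 <= c * a by lra.
nra.
Qed.

Lemma A_N [S : X -> X] : is_norm (A_op S) -> forall x, A_op S (- x) = A_op S x.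
Proof.
case=> _ _ hZ _ x; rewrite -scaleN1r hZ /cabs normrN normr1 /= mul1r //.
Qed.

Lemma N_opp z : N (- z) = N z.
Proof. by rewrite /sum2_norm /= (A_N NA1) (A_N NA2). Qed.

Lemma N_tri u v : N (u + v) <= N u + N v.
Proof.
case: NA1 => g1 _ _ t1; case: NA2 => g2 _ _ t2.
apply: sqrt_le_sq; first by rewrite addr_ge0 // N_ge0.
have hu := N_sq u; have hv := N_sq v.
have := @cs_ineq _ _ _ _ _ _ _ (N_ge0 u) (N_ge0 v) hu hv.
have := t1 u.1 v.1; have := t2 u.2 v.2.
have := g1 (u.1 + v.1); have := g2 (u.2 + v.2).
have := g1 u.1; have := g1 v.1; have := g2 u.2; have := g2 v.2.
move: hu hv; rewrite /=.
move: (N u) (N v) (A_op T1 u.1) (A_op T1 v.1) (A_op T2 u.2) (A_op T2 v.2)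
  (A_op T1 (u.1 + v.1)) (A_op T2 (u.2 + v.2)) => s t a b c d p q.
move=> hu hv d0 c0 b0 a0 q0 p0 hq hp hcs.
have hp2 : p ^+ 2 <= (a + b) ^+ 2.
  have : 0 <= (a + b - p) * (a + b + p) by apply: mulr_ge0; lra.
  rewrite !expr2; nra.
have hq2 : q ^+ 2 <= (c + d) ^+ 2.
  have : 0 <= (c + d - q) * (c + d + q) by apply: mulr_ge0; lra.
  rewrite !expr2; nra.
rewrite sqrrD hu hv; move: hp2 hq2; rewrite !sqrrD; lra.
Qed.

Lemma N_eq0 z : N z = 0 -> z = 0.
Proof.
case: NA1 => _ e1 _ _; case: NA2 => _ e2 _ _ h.
have := N_sq z; rewrite h expr0n /=.
have := sqr_ge0 (A_op T1 z.1); have := sqr_ge0 (A_op T2 z.2) => g2 g1 hz.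
have h1 : A_op T1 z.1 ^+ 2 = 0 by lra.
have h2 : A_op T2 z.2 ^+ 2 = 0 by lra.
move/eqP: h1; rewrite sqrf_eq0 => /eqP /e1 h1.
move/eqP: h2; rewrite sqrf_eq0 => /eqP /e2 h2.
by case: z h1 h2 {h hz g1 g2} => a b /= -> ->.
Qed.


Lemma AT_norm : is_norm (A_op T).
Proof.
have [k k0 hk] := AT_lb.
split.
- exact: A_ge0.
- move=> x h; apply: nrm_eq0; apply/le_anti/andP; split; last exact: nrm_ge0.
  have := hk x; rewrite h => h1.
  have := nrm_ge0 x; nra.
- move=> a x; apply: eq_of_sq; first exact: A_ge0.
    by apply: mulr_ge0; [exact: cabs_ge0 | exact: A_ge0].
  have hT : T1 (T2 (a *: x)) = a *: T1 (T2 x) by rewrite !linearZ.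
  rewrite exprMn !(A_sq CT) hT !nrmZ !exprMn; ring.
- move=> x y.
  rewrite -!N_M1 linearD.
  exact: (N_tri (T2 x, x) (T2 y, y)).
Qed.

Lemma eventually_small (f : nat -> R) : (f n @[n --> \oo] --> (0 : R)) ->
  forall e : R, 0 < e -> exists M, forall n, (M <= n)%N -> `|f n| < e.
Proof.
move=> H e e0; move/cvgrPdist_lt: H => H.
have := H e e0 => /eventually_ex [M HM]; exists M => n Mn.
by have := HM n Mn; rewrite sub0r normrN.
Qed.

Lemma closed_range (P : X -> X * X) :
  (forall a b, P (a - b) = P a - P b) -> (forall d, N (P d) = A_op T d) ->
  closed_wrt N [set z | exists x, z = P x].
Proof.
move=> PB PN u z Hu Hcv.
have [k k0 hk] := AT_lb.
have /choice [xs Hxs] : forall n, exists x, u n = P x.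
  by move=> n; case: (Hu n) => x ->; exists x.
have Hsm := @eventually_small _ Hcv.
have dist n m : k * nrm (xs n - xs m) <= N (u n - z) + N (u m - z).
  apply: (le_trans (hk _)); rewrite -PN PB -!Hxs.
  have -> : u n - u m = (u n - z) + - (u m - z) by rewrite opprB addrA subrK.
  by apply: (le_trans (N_tri _ _)); rewrite N_opp.
have [x Hx] : exists x, forall e : R, 0 < e -> exists M, forall n, (M <= n)%N ->
     nrm (xs n - x) < e.
  apply: complete_seq => e e0.
  have [M HM] := Hsm (k * e / 2) (divr_gt0 (mulr_gt0 k0 e0) (ltr0Sn _ 1)).
  exists M => n m Mn Mm.
  have h1 := HM n Mn; have h2 := HM m Mm.
  rewrite ger0_norm ?N_ge0 // in h1; rewrite ger0_norm ?N_ge0 // in h2.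
  have hd := dist n m; have : k * nrm (xs n - xs m) < k * e by lra.
  by rewrite ltr_pM2l.
exists x.
have : N (z - P x) <= 0.
  apply: nonpos_of_small => e e0.
  have [M1 HM1] := Hsm (e / 2) (divr_gt0 e0 (ltr0Sn _ 1)).
  have [M2 HM2] := Hx (e / 2) (divr_gt0 e0 (ltr0Sn _ 1)).
  pose n := maxn M1 M2.
  have h1 := HM1 n (leq_maxl _ _); have h2 := HM2 n (leq_maxr _ _).
  rewrite ger0_norm ?N_ge0 // in h1.
  have h3 : N (u n - P x) <= nrm (xs n - x) by rewrite Hxs -PB PN AT_le.
  have -> : z - P x = - (u n - z) + (u n - P x) by rewrite opprB addrA subrK.
  apply: (le_trans (N_tri _ _)); rewrite N_opp; lra.
move=> h; apply/eqP; rewrite -subr_eq0; apply/eqP/N_eq0.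
by apply/le_anti/andP; split => //; exact: N_ge0.
Qed.

Lemma fixed0 x : T x = x -> x = 0.
Proof.
move=> h; have [k k0 hk] := AT_lb.
have : A_op T x = 0 by rewrite /A_op h subrr sqrtr0.
move=> h0; have := hk x; rewrite h0 => h1.
apply: nrm_eq0; apply/le_anti/andP; split; last exact: nrm_ge0.
have := nrm_ge0 x; nra.
Qed.

Lemma inter0 : M1hat T2 `&` M2hat T1 = [set 0].
Proof.
apply/seteqP; split => z /=.
- rewrite /M1hat /M2hat /=; case=> [[x ->] [y e]]; case: e => e1 e2.
  have hx : T1 (T2 x) = x by rewrite e1 -e2.
  by rewrite (fixed0 _ hx) linear0.
- rewrite /M1hat /M2hat /= => ->; split; exists 0; by rewrite linear0.
Qed.

Lemma gM (a : R[i]) p q :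
  ((a *: p + q, T1 (a *: p + q)) : X * X) = a *: (p, T1 p) + (q, T1 q).
Proof. by rewrite linearP. Qed.

Lemma part3 (Y1 Y2 : set (X * X)) :
  lin_subspace Y1 -> lin_subspace Y2 ->
  (exists f, surj_lin_isometry N Y1 Y2 f) ->
  orth_decomp N (M1hat T2) Y1 -> orth_decomp N (M2hat T1) Y2 ->
  exists S, [/\ unitary N S, S @` M1hat T2 = M2hat T1
              & forall x, S (T2 x, x) = (x, T1 x)].
Proof.
move=> [Y10 Y1L] _ [f [fY fS fL fN]] [D1e D1u D1p] [D2e D2u D2p].
unfold M1hat, M2hat in *.
have /choice [dm Hdm] : forall z, exists p : (X * X) * (X * X),
    [/\ M1hat T2 p.1, Y1 p.2 & z = p.1 + p.2].
  by move=> z; have [m [y [hm hy ->]]] := D1e z; exists (m, y).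
pose S z := (((dm z).1.2, T1 (dm z).1.2) : X * X) + f (dm z).2.
have Sdec m y : M1hat T2 m -> Y1 y -> S (m + y) = (m.2, T1 m.2) + f y.
  move=> hm hy; case: (Hdm (m + y)) => h1 h2 h3.
  by rewrite /S; have [-> ->] := D1u _ _ _ _ h1 h2 hm hy (esym h3).
have f0 : f 0 = 0.
  have := fL 1 0 0 Y10 Y10; rewrite !scale1r addr0 => h.
  by apply: (addrI (f 0)); rewrite addr0 -h.
have M1_0 : M1hat T2 0 by exists 0; rewrite linear0.
have SM1 x : S (T2 x, x) = (x, T1 x).
  have := Sdec (T2 x, x) 0 (ex_intro _ x erefl) Y10.
  by rewrite addr0 f0 addr0.
exists S; split => //.
- split.
  + move=> a u v.
    case: (Hdm u) => [[p hp] hyu hu]; case: (Hdm v) => [[q hq] hyv hv].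
    have hm : M1hat T2 (a *: (dm u).1 + (dm v).1).
      by exists (a *: p + q); rewrite hp hq linearP.
    have hy : Y1 (a *: (dm u).2 + (dm v).2) by apply: Y1L.
    have -> : a *: u + v = (a *: (dm u).1 + (dm v).1) + (a *: (dm u).2 + (dm v).2).
      by rewrite {1}hu {1}hv scalerDr addrACA.
    rewrite Sdec // fL // /S hp hq /= gM scalerDr addrACA.
    by [].
  + move=> z'; have [m' [y' [[x ->] hy' ->]]] := D2e z'.
    have [y hy <-] := fS _ hy'.
    by exists ((T2 x, x) + y); rewrite Sdec //; exists x.
  + move=> z; case: (Hdm z) => [[x hx] hy hz].
    rewrite {2}hz /S hx /=.
    apply: eq_of_sq; [exact: N_ge0 | exact: N_ge0 |].
    rewrite D2p; [|by exists x | exact: fY].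
    by rewrite D1p //; [rewrite fN // N_M1 N_M2 | exists x].
- apply/seteqP; split => z'.
  + by case=> z [x ->] <-; rewrite SM1; exists x.
  + by case=> x ->; exists (T2 x, x); [exists x | exact: SM1].
Qed.
End Main.

Theorem lemma2p2 (R : realType) (X : completeNormedModType R[i])
  (T1 T2 : {linear X -> X}) :
  (forall x, T1 (T2 x) = T2 (T1 x)) ->
  contraction_op T1 -> contraction_op T2 ->
  is_norm (A_op T1) -> is_norm (A_op T2) ->
  opnorm_lt1 (fun x => T1 (T2 x)) ->
  let N := sum2_norm (A_op T1) (A_op T2) in
  [/\ is_norm (A_op (fun x => T1 (T2 x))),
      closed_wrt N (M1hat T2) /\ closed_wrt N (M2hat T1) /\
        M1hat T2 `&` M2hat T1 = [set 0]
    & forall Y1 Y2 : set (X * X),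
        lin_subspace Y1 -> lin_subspace Y2 ->
        (exists f, surj_lin_isometry N Y1 Y2 f) ->
        orth_decomp N (M1hat T2) Y1 -> orth_decomp N (M2hat T1) Y2 ->
        exists S, [/\ unitary N S, S @` M1hat T2 = M2hat T1
                    & forall x, S (T2 x, x) = (x, T1 x)]].
Proof.
move=> Hcomm C1 C2 NA1 NA2 Hc N; split.
- exact: (AT_norm _ _ _ _ C1 C2 NA1 NA2 Hc).
- split; last split.
  + apply: (closed_range _ _ _ _ C1 C2 NA1 NA2 Hc (fun x => (T2 x, x))).
      by move=> a b; rewrite linearB.
    exact: (N_M1 _ _ _ _ C1 C2).
  + apply: (closed_range _ _ _ _ C1 C2 NA1 NA2 Hc (fun x => (x, T1 x))).
      by move=> a b; rewrite linearB.
    exact: (N_M2 _ _ _ _ Hcomm C1 C2).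
  + exact: (inter0 _ _ _ _ C1 C2 Hc).
- move=> Y1 Y2; exact: (part3 _ _ _ _ Hcomm C1 C2).
Qed.
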